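(* $12,13,14,15,16\notin\operatorname{Spec}(32_{65})$.
   Context: $32_{65}$ is the finite integral symmetric relation algebra with atoms $1'$, $a$, $b$, $c$, all symmetric, in which a diversity cycle $xyz$ (with $x,y,z\in\{a,b,c\}$) is mandatory (i.e. $x;y\ge z$) if it involves $a$ and forbidden (i.e. $x;y\cdot z=0$) otherwise. A representation over a set $U$ is an embedding into the full relation algebra on $U\times U$. $\operatorname{Spec}(A)$ is the set of cardinals $\alpha\le\omega$ such that $A$ has a representation over a set of cardinality $\alpha$. *)

(* Defs.v *)
From mathcomp Require Import all_boot.
Set Implicit Arguments. Unset Strict Implicit. Unset Printing Implicit Defensive.

Definition atom := 'I_4.
Definition id_at : atom := @Ordinal 4 0 isT.
Definition a_at : atom := @Ordinal 4 1 isT.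
Definition b_at : atom := @Ordinal 4 2 isT.
Definition c_at : atom := @Ordinal 4 3 isT.

(* Composition of atoms in 32_65.  1' is the identity; all atoms are symmetric,
   so for diversity atoms x,y: 1' <= x;y iff x = y; and for a diversity atom z,
   z <= x;y iff the cycle xyz involves a (mandatory), otherwise forbidden. *)
Definition atom_comp (x y : atom) : {set atom} :=
  if x == id_at then [set y]
  else if y == id_at then [set x]
  else [set z | ((z == id_at) && (x == y))
                || ((z != id_at) && [|| x == a_at, y == a_at | z == a_at])].

Definition ra_elt := {set atom}.
Definition ra_one : ra_elt := [set id_at].
Definition ra_conv (X : ra_elt) : ra_elt := X. (* all atoms symmetric *)
Definition ra_comp (X Y : ra_elt) : ra_elt :=
  \bigcup_(x in X) \bigcup_(y in Y) atom_comp x y.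

Definition rel_diag (U : finType) : {set U * U} := [set p | p.1 == p.2].
Definition rel_conv (U : finType) (R : {set U * U}) : {set U * U} :=
  [set p | (p.2, p.1) \in R].
Definition rel_comp (U : finType) (R S : {set U * U}) : {set U * U} :=
  [set p | [exists z, ((p.1, z) \in R) && ((z, p.2) \in S)]].

Definition representation (U : finType) (h : ra_elt -> {set U * U}) : Prop :=
  injective h /\
  (forall X Y, h (X :|: Y) = h X :|: h Y) /\
  (forall X, h (~: X) = ~: h X) /\
  h ra_one = rel_diag U /\
  (forall X, h (ra_conv X) = rel_conv (h X)) /\
  (forall X Y, h (ra_comp X Y) = rel_comp (h X) (h Y)).

Definition in_spec (n : nat) : Prop :=
  exists (U : finType) (h : ra_elt -> {set U * U}), #|U| = n /\ representation h.

(* Main.v *)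
Require Import Defs.
From mathcomp Require Import all_boot.
Set Implicit Arguments. Unset Strict Implicit. Unset Printing Implicit Defensive.

Definition RR (U : finType) (h : ra_elt -> {set U * U}) (t : atom) : {set U * U} :=
  h [set t].

Lemma rep_setT (U : finType) (h : ra_elt -> {set U * U}) :
  representation h -> h setT = setT.
Proof.
move=> [_ [hU [hC _]]].
by rewrite -(setUCr set0) hU hC setUCr.
Qed.

Lemma rep_set0 (U : finType) (h : ra_elt -> {set U * U}) :
  representation h -> h set0 = set0.
Proof.
move=> Hr; have := rep_setT Hr; case: Hr => [_ [hU [hC _]]] HT.
by rewrite -setCT hC HT setCT.
Qed.

Lemma rep_setI (U : finType) (h : ra_elt -> {set U * U}) (X Y : ra_elt) :
  representation h -> h (X :&: Y) = h X :&: h Y.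
Proof.
move=> [_ [hU [hC _]]].
rewrite -[X :&: Y]setCK setCI hC hU !hC.
by rewrite -setCI setCK.
Qed.

Lemma rep_mono (U : finType) (h : ra_elt -> {set U * U}) (X Y : ra_elt) p :
  representation h -> X \subset Y -> p \in h X -> p \in h Y.
Proof.
move=> [_ [hU _]] /setUidPr <-; rewrite hU => hp.
by rewrite inE hp.
Qed.

Lemma RR_disj (U : finType) (h : ra_elt -> {set U * U}) s t p :
  representation h -> s != t -> p \in RR h s -> p \in RR h t -> False.
Proof.
move=> Hr st ps pt.
have : p \in h ([set s] :&: [set t]) by rewrite rep_setI // inE ps pt.
have -> : [set s] :&: [set t] = set0.
  apply/setP => x; rewrite !inE; apply/negP => /andP [/eqP -> /eqP E].
  by rewrite E eqxx in st.
by rewrite rep_set0 // inE.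
Qed.

Lemma RR_sym (U : finType) (h : ra_elt -> {set U * U}) t u v :
  representation h -> (u, v) \in RR h t -> (v, u) \in RR h t.
Proof.
move=> [_ [_ [_ [_ [hcv _]]]]].
move=> H; have := hcv [set t]; rewrite /ra_conv => E.
by move: H; rewrite /RR {2}E inE.
Qed.

Lemma RR_comp (U : finType) (h : ra_elt -> {set U * U}) s t :
  representation h -> rel_comp (RR h s) (RR h t) = h (atom_comp s t).
Proof.
move=> [_ [_ [_ [_ [_ hcp]]]]].
by rewrite /RR -hcp /ra_comp big_set1 big_set1.
Qed.

Lemma RR_mand (U : finType) (h : ra_elt -> {set U * U}) s t r u v :
  representation h -> r \in atom_comp s t -> (u, v) \in RR h r ->
  exists w, ((u, w) \in RR h s) /\ ((w, v) \in RR h t).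
Proof.
move=> Hr rin uv.
have : (u, v) \in h (atom_comp s t).
  by apply: (rep_mono Hr _ uv); rewrite sub1set.
rewrite -RR_comp // inE /= => /existsP [w /andP [h1 h2]].
by exists w.
Qed.

Definition bc (t : atom) := (t == b_at) || (t == c_at).

Lemma comp_bc s t : bc s -> bc t -> atom_comp s t \subset [set id_at; a_at].
Proof.
by move=> /orP [/eqP -> | /eqP ->] /orP [/eqP -> | /eqP ->];
  apply/subsetP => x; rewrite /atom_comp !inE /=; case: x => [[|[|[|[|]]]] ?].
Qed.

Lemma RR_tri (U : finType) (h : ra_elt -> {set U * U}) s t p q r :
  representation h -> bc s -> bc t -> (p, q) \in RR h s -> (q, r) \in RR h t ->
  ((p, r) \notin RR h b_at) && ((p, r) \notin RR h c_at).
Proof.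
move=> Hr bs bt pq qr.
have : (p, r) \in h (atom_comp s t).
  by rewrite -RR_comp // inE; apply/existsP; exists q; rewrite pq qr.
move/(rep_mono Hr (comp_bc bs bt)).
case: (Hr) => [_ [hU _]]; rewrite hU inE => /orP [] H.
  by apply/andP; split; apply/negP => H'; apply: (RR_disj Hr _ H H').
by apply/andP; split; apply/negP => H'; apply: (RR_disj Hr _ H H').
Qed.

Lemma card_dU (T : finType) (A B : {set T}) :
  A :&: B = set0 -> #|A :|: B| = #|A| + #|B|.
Proof. by move=> H; rewrite cardsU H cards0 subn0. Qed.

Lemma a_in_bc s t : bc s -> bc t -> a_at \in atom_comp s t.
Proof. by move=> /orP [/eqP -> | /eqP ->] /orP [/eqP -> | /eqP ->]; rewrite /atom_comp !inE. Qed.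

Definition Q (U : finType) (h : ra_elt -> {set U * U}) u v s t : {set U} :=
  [set y | ((u, y) \in RR h s) && ((y, v) \in RR h t)].

Definition PP (U : finType) (h : ra_elt -> {set U * U}) u v : {set U} :=
  Q h u v b_at b_at :|: Q h u v b_at c_at :|: Q h u v c_at b_at :|: Q h u v c_at c_at.

Definition NN (U : finType) (h : ra_elt -> {set U * U}) u : {set U} :=
  [set v | ((u, v) \in RR h b_at) || ((u, v) \in RR h c_at)].

Lemma Q_gt0 (U : finType) (h : ra_elt -> {set U * U}) u v s t :
  representation h -> (u, v) \in RR h a_at -> bc s -> bc t -> 0 < #|Q h u v s t|.
Proof.
move=> Hr uv bs bt.
have [w [h1 h2]] := RR_mand Hr (a_in_bc bs bt) uv.
by apply/card_gt0P; exists w; rewrite inE h1 h2.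
Qed.

Lemma Q_disj (U : finType) (h : ra_elt -> {set U * U}) u v s t s' t' :
  representation h -> (s != s') || (t != t') -> Q h u v s t :&: Q h u v s' t' = set0.
Proof.
move=> Hr st; apply/setP => y; rewrite !inE.
apply/negP => /andP [/andP [h1 h2] /andP [h3 h4]].
case/orP: st => H; first exact: (RR_disj Hr H h1 h3).
exact: (RR_disj Hr H h2 h4).
Qed.

Lemma PP_card (U : finType) (h : ra_elt -> {set U * U}) u v :
  representation h -> (u, v) \in RR h a_at -> 4 <= #|PP h u v|.
Proof.
move=> Hr uv; rewrite /PP.
have bb : bc b_at by []. have cc : bc c_at by [].
rewrite card_dU; last by rewrite !setIUl !Q_disj // !setU0.
rewrite card_dU; last by rewrite !setIUl !Q_disj // !setU0.
rewrite card_dU; last by rewrite !Q_disj.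
have := Q_gt0 Hr uv bb bb; have := Q_gt0 Hr uv bb cc.
have := Q_gt0 Hr uv cc bb; have := Q_gt0 Hr uv cc cc.
move: (#|_|) (#|_|) (#|_|) (#|_|) => n1 n2 n3 n4.
case: n1 => // n1; case: n2 => // n2; case: n3 => // n3; case: n4 => // n4 _ _ _ _.
by rewrite !addSn !addnS.
Qed.

Lemma PP_mem (U : finType) (h : ra_elt -> {set U * U}) u v y :
  y \in PP h u v -> exists s t, [/\ bc s, bc t, (u, y) \in RR h s & (y, v) \in RR h t].
Proof.
rewrite /PP !inE => /orP [/orP [/orP [] | ] | ] /andP [h1 h2].
- by exists b_at, b_at.
- by exists b_at, c_at.
- by exists c_at, b_at.
- by exists c_at, c_at.
Qed.

Lemma PP_sub (U : finType) (h : ra_elt -> {set U * U}) u v :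
  PP h u v \subset NN h u.
Proof.
apply/subsetP => y /PP_mem [s [t [/orP [] /eqP -> _ H _]]];
  by rewrite inE H ?orbT.
Qed.

Lemma diag_id (U : finType) (h : ra_elt -> {set U * U}) u :
  representation h -> (u, u) \in RR h id_at.
Proof.
by move=> [_ [_ [_ [h1 _]]]]; rewrite /RR -/ra_one h1 inE.
Qed.

Lemma deg8 (U : finType) (h : ra_elt -> {set U * U}) u :
  representation h -> 8 <= #|NN h u|.
Proof.
move=> Hr.
have [z [uz _]] : exists z, ((u, z) \in RR h a_at) /\ ((z, u) \in RR h a_at).
  apply: (RR_mand Hr _ (diag_id u Hr)); by rewrite /atom_comp !inE.
have [w [uw wz]] : exists w, ((u, w) \in RR h a_at) /\ ((w, z) \in RR h b_at).
  apply: (RR_mand Hr _ uz); by rewrite /atom_comp !inE.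
have D : PP h u z :&: PP h u w = set0.
  apply/setP => y; rewrite in_setI in_set0; apply/negP => /andP [].
  move=> /PP_mem [s [t [bs bt _ yz]]] /PP_mem [s' [t' [bs' bt' _ yw]]].
  have := RR_tri Hr bt' bt (RR_sym Hr yw) yz.
  by rewrite wz.
have S : PP h u z :|: PP h u w \subset NN h u by rewrite subUset !PP_sub.
have := subset_leq_card S.
rewrite card_dU //.
have := PP_card Hr uz; have := PP_card Hr uw.
move=> h1 h2 h3; apply: leq_trans h3.
by have := leq_add h2 h1.
Qed.

Lemma rep_size (U : finType) (h : ra_elt -> {set U * U}) :
  representation h -> 17 <= #|U|.
Proof.
move=> Hr.
have : RR h b_at != set0.
  apply/eqP => E; case: (Hr) => [inj _].
  have : [set b_at] = set0 :> ra_elt by apply: inj; rewrite -/(RR h b_at) E rep_set0.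
  by move/setP => /(_ b_at); rewrite !inE.
case/set0Pn => [[x y] xy].
have [w [xw wy]] : exists w, ((x, w) \in RR h a_at) /\ ((w, y) \in RR h a_at).
  apply: (RR_mand Hr _ xy); by rewrite /atom_comp !inE.
have D1 : NN h x :&: NN h y = set0.
  apply/setP => v; rewrite in_setI in_set0 !inE; apply/negP.
  have bb : bc b_at by []. have cc : bc c_at by [].
  move=> /andP [] /orP [] h1 /orP [] h2;
  first [ have := RR_tri Hr bb bb h1 (RR_sym Hr h2)
        | have := RR_tri Hr bb cc h1 (RR_sym Hr h2)
        | have := RR_tri Hr cc bb h1 (RR_sym Hr h2)
        | have := RR_tri Hr cc cc h1 (RR_sym Hr h2) ]; by rewrite xy.
have D2 : (NN h x :|: NN h y) :&: [set w] = set0.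
  apply/setP => v; rewrite in_setI in_set0 in_set1; apply/negP => /andP [H /eqP E].
  subst v; move: H; rewrite !inE => /orP [] /orP [] H.
  - exact: (RR_disj Hr _ xw H).
  - exact: (RR_disj Hr _ xw H).
  - exact: (RR_disj Hr _ (RR_sym Hr wy) H).
  - exact: (RR_disj Hr _ (RR_sym Hr wy) H).
have := max_card (NN h x :|: NN h y :|: [set w]).
rewrite card_dU // card_dU // cards1.
move=> H; apply: leq_trans H.
by rewrite addn1 ltnS (leq_add (deg8 x Hr) (deg8 y Hr)).
Qed.

Theorem mainTheorem7 : forall n : nat, 12 <= n <= 16 -> ~ in_spec n.
Proof.
move=> n /andP [_ Hn] [U [h [HU Hr]]].
have := rep_size Hr; rewrite HU => H.
by have := leq_trans H Hn.
Qed.
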